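(* In each of the following pairs $(\mathfrak g,\mathfrak g_0)$ of real $4$-dimensional Lie algebras, $\mathfrak g_0$ is not a (continuous or sequential) contraction of $\mathfrak g$ over $\mathbb R$: $(so(3)\oplus A_1,\,A_{4.8}^{-1})$, $(so(3)\oplus A_1,\,A_{3.4}^{-1}\oplus A_1)$, $(A_{4.8}^{-1},\,A_{3.5}^0\oplus A_1)$, $(A_{4.9}^0,\,A_{3.4}^{-1}\oplus A_1)$, $(A_{4.10},\,A_{4.3})$, $(A_{4.10},\,A_{2.1}\oplus2A_1)$, $(A_{4.10},\,A_{3.4}^a\oplus A_1)$ for every $a$ with $0<|a|<1$, and $(2A_{2.1},\,A_{3.5}^b\oplus A_1)$ for every $b>0$.
   Context: All algebras have basis $e_1,\dots,e_4$; only nonzero brackets (up to antisymmetry) are listed. $so(3)\oplus A_1$: $[e_1,e_2]=e_3$, $[e_2,e_3]=e_1$, $[e_3,e_1]=e_2$. $A_{4.8}^{-1}$: $[e_2,e_3]=e_1$, $[e_2,e_4]=e_2$, $[e_3,e_4]=-e_3$. $A_{3.4}^{-1}\oplus A_1$: $[e_1,e_3]=e_1$, $[e_2,e_3]=-e_2$. $A_{3.5}^0\oplus A_1$: $[e_1,e_3]=-e_2$, $[e_2,e_3]=e_1$. $A_{4.9}^0$: $[e_2,e_3]=e_1$, $[e_2,e_4]=-e_3$, $[e_3,e_4]=e_2$. $A_{4.10}$: $[e_1,e_3]=e_1$, $[e_2,e_3]=e_2$, $[e_1,e_4]=-e_2$, $[e_2,e_4]=e_1$. $A_{4.3}$: $[e_1,e_4]=e_1$,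 $[e_3,e_4]=e_2$. $A_{2.1}\oplus2A_1$: $[e_1,e_2]=e_1$. $A_{3.4}^a\oplus A_1$: $[e_1,e_3]=e_1$, $[e_2,e_3]=ae_2$. $2A_{2.1}$: $[e_1,e_2]=e_1$, $[e_3,e_4]=e_3$. $A_{3.5}^b\oplus A_1$: $[e_1,e_3]=be_1-e_2$, $[e_2,e_3]=e_1+be_2$. Continuous contraction of $\mathfrak g=(V,[\cdot,\cdot])$: for continuous $U:(0,1]\to GL(V)$, the algebra $(V,[\cdot,\cdot]_0)$ with $[x,y]_0=\lim_{\varepsilon\to0^+}U_\varepsilon^{-1}[U_\varepsilon x,U_\varepsilon y]$ when this limit exists for all $x,y$; sequential contraction: same with a sequence $U_p\in GL(V)$ and $p\to\infty$. ''Contraction of $\mathfrak g$ is $\mathfrak g_0$'' means the resulting algebra is isomorphic to $\mathfrak g_0$. *)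

(* Defs.v *)
From HB Require Import structures.
From mathcomp Require Import all_boot all_order all_algebra.
From mathcomp Require Import all_classical all_reals all_analysis.
Set Implicit Arguments. Unset Strict Implicit. Unset Printing Implicit Defensive.
Import Order.TTheory GRing.Theory Num.Theory.
Import numFieldNormedType.Exports.
Local Open Scope classical_set_scope.
Local Open Scope ring_scope.

Section LieDefs.
Variable R : realType.
Local Open Scope nat_scope.
Local Open Scope ring_scope.

(* V = R^4 as column vectors; e k = e_{k+1} (0-indexed). *)
Definition e (k : nat) : 'cV[R]_4 := delta_mx (inord k) 0.

(* A bracket table: list of nonzero brackets [e_i, e_j] = v, given up to
   antisymmetry; stc returns [e_i, e_j] for all i j. *)
Definition stc (l : seq (nat * nat * 'cV[R]_4)) (i j : 'I_4) : 'cV[R]_4 :=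
  \sum_(t <- l) ((((t.1.1 == i) && (t.1.2 == j))%:R - ((t.1.1 == j) && (t.1.2 == i))%:R) *: t.2).

Definition lie_br (c : 'I_4 -> 'I_4 -> 'cV[R]_4) (x y : 'cV[R]_4) : 'cV[R]_4 :=
  \sum_(i < 4) \sum_(j < 4) (x i 0 * y j 0) *: c i j.

Definition so3_A1 := stc [:: (0, 1, e 2); (1, 2, e 0); (2, 0, e 1)].
Definition A48m1 := stc [:: (1, 2, e 0); (1, 3, e 1); (2, 3, - e 2)].
Definition A34m1_A1 := stc [:: (0, 2, e 0); (1, 2, - e 1)].
Definition A350_A1 := stc [:: (0, 2, - e 1); (1, 2, e 0)].
Definition A490 := stc [:: (1, 2, e 0); (1, 3, - e 2); (2, 3, e 1)].
Definition A410 := stc [:: (0, 2, e 0); (1, 2, e 1); (0, 3, - e 1); (1, 3, e 0)].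
Definition A43 := stc [:: (0, 3, e 0); (2, 3, e 1)].
Definition A21_2A1 := stc [:: (0, 1, e 0)].
Definition A34a_A1 (a : R) := stc [:: (0, 2, e 0); (1, 2, a *: e 1)].
Definition two_A21 := stc [:: (0, 1, e 0); (2, 3, e 2)].
Definition A35b_A1 (b : R) := stc [:: (0, 2, b *: e 0 - e 1); (1, 2, e 0 + b *: e 1)].

Definition iso_to (f : 'cV[R]_4 -> 'cV[R]_4 -> 'cV[R]_4) (c0 : 'I_4 -> 'I_4 -> 'cV[R]_4) :=
  exists A : 'M[R]_4, A \in unitmx /\
    forall x y, A *m f x y = lie_br c0 (A *m x) (A *m y).

Definition cont_contraction (c c0 : 'I_4 -> 'I_4 -> 'cV[R]_4) :=
  exists U : R -> 'M[R]_4,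
    (forall t, 0 < t <= 1 -> U t \in unitmx) /\
    {within [set t : R | 0 < t <= 1], continuous U} /\
    exists f : 'cV[R]_4 -> 'cV[R]_4 -> 'cV[R]_4,
      (forall x y, (fun t => invmx (U t) *m lie_br c (U t *m x) (U t *m y))
                     @ 0^'+ --> f x y) /\
      iso_to f c0.

Definition seq_contraction (c c0 : 'I_4 -> 'I_4 -> 'cV[R]_4) :=
  exists U : nat -> 'M[R]_4,
    (forall p, U p \in unitmx) /\
    exists f : 'cV[R]_4 -> 'cV[R]_4 -> 'cV[R]_4,
      (forall x y, (fun p => invmx (U p) *m lie_br c (U p *m x) (U p *m y))
                     @ \oo --> f x y) /\
      iso_to f c0.

Definition not_contraction (c c0 : 'I_4 -> 'I_4 -> 'cV[R]_4) :=
  ~ cont_contraction c c0 /\ ~ seq_contraction c c0.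

End LieDefs.

(* Main.v *)
Require Import Defs.
Set Warnings "-notation-overridden,-ambiguous-paths,-notation-incompatible-prefix".
From HB Require Import structures.
From mathcomp Require Import all_boot all_order all_algebra.
From mathcomp Require Import all_classical all_reals all_analysis.
From mathcomp Require Import ring lra.
Set Implicit Arguments. Unset Strict Implicit. Unset Printing Implicit Defensive.
Import Order.TTheory GRing.Theory Num.Theory.
Import numFieldNormedType.Exports.
Local Open Scope classical_set_scope.
Local Open Scope ring_scope.

Section Gen.
Variable R : realType.

Definition adc (c : 'I_4 -> 'I_4 -> 'cV[R]_4) (y : 'cV[R]_4) : 'M[R]_4 :=
  \matrix_(k, j) \sum_(i < 4) y i 0 * c i j k 0.

Lemma lie_brE c x y : lie_br c x y = adc c x *m y.
Proof.
apply/matrixP => k l; rewrite (ord1 l) /lie_br !mxE summxE.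
under eq_bigr do rewrite summxE.
under [RHS]eq_bigr do rewrite mxE big_distrl /=.
rewrite exchange_big /=; apply: eq_bigr => i _; apply: eq_bigr => j _.
rewrite !mxE /=; ring.
Qed.

Definition TQ (a b : R) c := forall y,
  0 <= a * (\tr (adc c y))^+2 + b * \tr (adc c y *m adc c y).

Lemma mul_e (N : 'M[R]_4) (k j : 'I_4) : (N *m e R j) k 0 = N k j.
Proof. by rewrite /e inord_val -colE mxE. Qed.

Lemma cvg_sumI (T : Type) (F : set_system T) {FF : Filter F}
  (g : 'I_4 -> T -> R) (l : 'I_4 -> R) :
  (forall i, g i @ F --> l i) ->
  (fun t => \sum_(i < 4) g i t) @ F --> \sum_(i < 4) l i.
Proof.
move=> H; rewrite unlock; elim: (index_enum _) => [|i r IH] /=.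
  exact: cvg_cst.
exact: cvgD.
Qed.

Definition phi (a b : R) (N : 'M[R]_4) := a * (\tr N)^+2 + b * \tr (N *m N).

Lemma phi_sim a b (N V : 'M[R]_4) : V \in unitmx ->
  phi a b (invmx V *m N *m V) = phi a b N.
Proof.
move=> Vu; rewrite /phi.
have E : (invmx V *m N *m V) *m (invmx V *m N *m V) = invmx V *m (N *m N) *m V.
  by rewrite !mulmxA mulmxK // !mulmxA.
by rewrite E !(mxtrace_mulC _ V) !mulKVmx.
Qed.

Lemma cvg_phi a b (T : Type) (F : set_system T) {FF : Filter F}
  (M : T -> 'M[R]_4) (L : 'M[R]_4) :
  (forall k j, (fun t => M t k j) @ F --> L k j) ->
  (fun t => phi a b (M t)) @ F --> phi a b L.
Proof.
move=> H; rewrite /phi /mxtrace.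
apply: cvgD; apply: cvgMl_tmp.
  rewrite expr2; apply: cvgM; apply: cvg_sumI => i; exact: H.
apply: cvg_sumI => i.
under eq_cvg do rewrite mxE.
rewrite mxE; apply: cvg_sumI => j; apply: cvgM; exact: H.
Qed.

Lemma key (T : Type) (F : set_system T) {FF : ProperFilter F} c c0 a b
  (U : T -> 'M[R]_4) f :
  (\forall t \near F, U t \in unitmx) ->
  (forall x y, (fun t => invmx (U t) *m lie_br c (U t *m x) (U t *m y)) @ F --> f x y) ->
  iso_to f c0 -> TQ a b c -> TQ a b c0.
Proof.
move=> Uu Hc [A [Au HA]] Hinv z.
pose x := invmx A *m z.
pose M t := invmx (U t) *m adc c (U t *m x) *m U t.
pose Mf := invmx A *m adc c0 z *m A.
have Mfe k j : Mf k j = f x (e R j) k 0.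
  have -> : f x (e R j) = Mf *m e R j.
    by rewrite -[f x _](mulKmx Au) HA lie_brE /x mulKVmx // /Mf !mulmxA.
  by rewrite mul_e.
have Me t : U t \in unitmx -> forall k j,
    M t k j = (invmx (U t) *m lie_br c (U t *m x) (U t *m e R j)) k 0.
  by move=> Ut k j; rewrite lie_brE /M !mulmxA mul_e.
have cM k j : (fun t => M t k j) @ F --> Mf k j.
  rewrite Mfe.
  have H2 := @continuous_cvg _ _ _ F _ _ _ _ (@coord_continuous R _ _ k 0 (f x (e R j))) (Hc x (e R j)).
  refine (cvg_trans _ (H2 _)); apply: near_eq_cvg; near=> t => /=.
  rewrite Me //; near: t; exact: Uu.
have := cvg_phi (a:=a) (b:=b) cM.
have -> : phi a b Mf = a * (\tr (adc c0 z))^+2 + b * \tr (adc c0 z *m adc c0 z).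
  by rewrite phi_sim.
move=> Hcv; have := closed_cvg [set r : R | 0 <= r] ltac:(exact: closed_ge) _ _ (Hcv _); apply.
near=> t; rewrite /M phi_sim; first exact: Hinv.
near: t; exact: Uu.
Unshelve. all: by end_near.
Qed.

Lemma not_contr c c0 a b : TQ a b c -> ~ TQ a b c0 -> not_contraction c c0.
Proof.
move=> Hc Hn; split.
  move=> [U [HU [_ [f [Hf Hi]]]]]; apply: Hn.
  apply: (key (F := 0^'+) _ Hf Hi Hc).
  near=> t; apply: HU; apply/andP; split.
    near: t; exact: nbhs_right_gt.
  apply/ltW; near: t; apply: nbhs_right_lt; exact: ltr01.
move=> [U [HU [f [Hf Hi]]]]; apply: Hn.
apply: (key (F := \oo) _ Hf Hi Hc).
by apply: nearW.
Unshelve. all: by end_near.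
Qed.


Notation o0 := (@Ordinal 4 0 isT).
Notation o1 := (@Ordinal 4 1 isT).
Notation o2 := (@Ordinal 4 2 isT).
Notation o3 := (@Ordinal 4 3 isT).
Lemma sum4 (F : 'I_4 -> R) : \sum_(i < 4) F i = F o0 + F o1 + F o2 + F o3.
Proof.
rewrite !big_ord_recl big_ord0 addr0 !addrA.
by congr (_ + _ + _ + _); congr F; apply: val_inj.
Qed.
Lemma eE (k : nat) (i : 'I_4) : (k < 4)%N -> e R k i 0 = (k == i)%:R.
Proof.
move=> kl; rewrite /e mxE eqxx andbT; congr (nat_of_bool _)%:R.
case: (eqVneq (inord k) i) => [<-|ne]; first by rewrite inordK ?eqxx.
apply/esym/negbTE; apply: contra ne => /eqP ki; apply/eqP; apply: val_inj.
by rewrite /= inordK.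
Qed.

Definition ind (a b : nat) (i j : 'I_4) : R :=
  ((a == i) && (b == j))%:R - ((a == j) && (b == i))%:R.
Definition dl (n : nat) (k : 'I_4) : R := (n == k)%:R.

Lemma stc1 (l : seq (nat * nat * 'cV[R]_4)) i j k :
  stc l i j k 0 = \sum_(t <- l) ind t.1.1 t.1.2 i j * t.2 k 0.
Proof. by rewrite /stc summxE; apply: eq_bigr => t _; rewrite mxE. Qed.

Lemma eD (n : nat) k : (n < 4)%N -> e R n k 0 = dl n k.
Proof. exact: eE. Qed.

Lemma adcE (c : 'I_4 -> 'I_4 -> 'cV[R]_4) (y : 'cV[R]_4) k j : adc c y k j = \sum_(i < 4) y i 0 * c i j k 0.
Proof. by rewrite mxE. Qed.

Lemma vN (v : 'cV[R]_4) k : (- v) k 0 = - v k 0. Proof. by rewrite mxE. Qed.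
Lemma vZ (p : R) (v : 'cV[R]_4) k : (p *: v) k 0 = p * v k 0. Proof. by rewrite mxE. Qed.
Lemma vD (v w : 'cV[R]_4) k : (v + w) k 0 = v k 0 + w k 0. Proof. by rewrite mxE. Qed.
Lemma vB (v w : 'cV[R]_4) k : (v - w) k 0 = v k 0 - w k 0. Proof. by rewrite !mxE. Qed.

Lemma so3E i j k : so3_A1 R i j k 0 =
  ind 0 1 i j * dl 2 k + ind 1 2 i j * dl 0 k + ind 2 0 i j * dl 1 k.
Proof. rewrite /so3_A1 stc1 !big_cons big_nil /= ?vB ?vD ?vZ ?vN !eD //; ring. Qed.

Lemma A48E i j k : A48m1 R i j k 0 =
  ind 1 2 i j * dl 0 k + ind 1 3 i j * dl 1 k + ind 2 3 i j * (- dl 2 k).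
Proof. rewrite /A48m1 stc1 !big_cons big_nil /= ?vB ?vD ?vZ ?vN !eD //; ring. Qed.

Lemma A34m1E i j k : A34m1_A1 R i j k 0 =
  ind 0 2 i j * dl 0 k + ind 1 2 i j * (- dl 1 k).
Proof. rewrite /A34m1_A1 stc1 !big_cons big_nil /= ?vB ?vD ?vZ ?vN !eD //; ring. Qed.

Lemma A350E i j k : A350_A1 R i j k 0 =
  ind 0 2 i j * (- dl 1 k) + ind 1 2 i j * dl 0 k.
Proof. rewrite /A350_A1 stc1 !big_cons big_nil /= ?vB ?vD ?vZ ?vN !eD //; ring. Qed.

Lemma A490E i j k : A490 R i j k 0 =
  ind 1 2 i j * dl 0 k + ind 1 3 i j * (- dl 2 k) + ind 2 3 i j * dl 1 k.
Proof. rewrite /A490 stc1 !big_cons big_nil /= ?vB ?vD ?vZ ?vN !eD //; ring. Qed.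

Lemma A410E i j k : A410 R i j k 0 =
  ind 0 2 i j * dl 0 k + ind 1 2 i j * dl 1 k + ind 0 3 i j * (- dl 1 k) + ind 1 3 i j * dl 0 k.
Proof. rewrite /A410 stc1 !big_cons big_nil /= ?vB ?vD ?vZ ?vN !eD //; ring. Qed.

Lemma A43E i j k : A43 R i j k 0 =
  ind 0 3 i j * dl 0 k + ind 2 3 i j * dl 1 k.
Proof. rewrite /A43 stc1 !big_cons big_nil /= ?vB ?vD ?vZ ?vN !eD //; ring. Qed.

Lemma A21E i j k : A21_2A1 R i j k 0 =
  ind 0 1 i j * dl 0 k.
Proof. rewrite /A21_2A1 stc1 !big_cons big_nil /= ?vB ?vD ?vZ ?vN !eD //; ring. Qed.

Lemma A34aE (p : R) i j k : A34a_A1 p i j k 0 =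
  ind 0 2 i j * dl 0 k + ind 1 2 i j * (p * dl 1 k).
Proof. rewrite /A34a_A1 stc1 !big_cons big_nil /= ?vB ?vD ?vZ ?vN !eD //; ring. Qed.

Lemma tA21E i j k : two_A21 R i j k 0 =
  ind 0 1 i j * dl 0 k + ind 2 3 i j * dl 2 k.
Proof. rewrite /two_A21 stc1 !big_cons big_nil /= ?vB ?vD ?vZ ?vN !eD //; ring. Qed.

Lemma A35bE (p : R) i j k : A35b_A1 p i j k 0 =
  ind 0 2 i j * (p * dl 0 k - dl 1 k) + ind 1 2 i j * (dl 0 k + p * dl 1 k).
Proof. rewrite /A35b_A1 stc1 !big_cons big_nil /= ?vB ?vD ?vZ ?vN !eD //; ring. Qed.

Ltac comp cE := rewrite /mxtrace !sum4 !mxE !sum4 !adcE !sum4 !cE /ind /dl /=.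

Ltac fin P := lazymatch goal with |- is_true (@Order.le _ _ _ ?E) => have -> : E = P by ring end.
Ltac finN P := lazymatch goal with |- is_true (@Order.le _ _ _ ?E) -> _ => have -> : E = P by ring end.
Lemma so3_TQ : TQ 0 (-1) (so3_A1 R).
Proof.
move=> y; comp so3E; move: (y o0 0) (y o1 0) (y o2 0) (y o3 0) => x0 x1 x2 x3.
fin (2 * (x0^+2 + x1^+2 + x2^+2)); nra.
Qed.

Lemma A48_TQ : TQ 0 1 (A48m1 R).
Proof.
move=> y; comp A48E; move: (y o0 0) (y o1 0) (y o2 0) (y o3 0) => x0 x1 x2 x3.
fin (2 * x3^+2); nra.
Qed.

Lemma A490_TQ : TQ 0 (-1) (A490 R).
Proof.
move=> y; comp A490E; move: (y o0 0) (y o1 0) (y o2 0) (y o3 0) => x0 x1 x2 x3.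
fin (2 * x3^+2); nra.
Qed.

Lemma A410_TQ : TQ 1 (-2) (A410 R).
Proof.
move=> y; comp A410E; move: (y o0 0) (y o1 0) (y o2 0) (y o3 0) => x0 x1 x2 x3.
fin (4 * x3^+2); nra.
Qed.

Lemma tA21_TQ : TQ (-1) 2 (two_A21 R).
Proof.
move=> y; comp tA21E; move: (y o0 0) (y o1 0) (y o2 0) (y o3 0) => x0 x1 x2 x3.
fin ((x1 - x3)^+2); exact: sqr_ge0.
Qed.

Lemma A48_N : ~ TQ 0 (-1) (A48m1 R).
Proof. move=> /(_ (e R 3)); comp A48E; rewrite !eD // /dl /=; finN (-2 : R); lra. Qed.

Lemma A34m1_N a b : b < 0 -> ~ TQ a b (A34m1_A1 R).
Proof.
move=> b0 /(_ (e R 2)); comp A34m1E; rewrite !eD // /dl /=; finN (2 * b); lra.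
Qed.

Lemma A350_N : ~ TQ 0 1 (A350_A1 R).
Proof. move=> /(_ (e R 2)); comp A350E; rewrite !eD // /dl /=; finN (-2 : R); lra. Qed.

Lemma A43_N : ~ TQ 1 (-2) (A43 R).
Proof. move=> /(_ (e R 3)); comp A43E; rewrite !eD // /dl /=; finN (-1 : R); lra. Qed.

Lemma A21_N : ~ TQ 1 (-2) (A21_2A1 R).
Proof. move=> /(_ (e R 1)); comp A21E; rewrite !eD // /dl /=; finN (-1 : R); lra. Qed.

Lemma A34a_N (p : R) : 0 < `|p| < 1 -> ~ TQ 1 (-2) (A34a_A1 p).
Proof.
move=> /andP[_]; rewrite ltr_norml => /andP[_ p1].
move=> /(_ (e R 2)); comp A34aE; rewrite !eD // /dl /=; finN (- (1 - p)^+2); nra.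
Qed.

Lemma A35b_N (p : R) : 0 < p -> ~ TQ (-1) 2 (A35b_A1 p).
Proof.
move=> _ /(_ (e R 2)); comp A35bE; rewrite !eD // /dl /=; finN (-4 : R); lra.
Qed.

End Gen.

Theorem mainTheorem8 (R : realType) :
  not_contraction (so3_A1 R) (A48m1 R) /\
  not_contraction (so3_A1 R) (A34m1_A1 R) /\
  not_contraction (A48m1 R) (A350_A1 R) /\
  not_contraction (A490 R) (A34m1_A1 R) /\
  not_contraction (A410 R) (A43 R) /\
  not_contraction (A410 R) (A21_2A1 R) /\
  (forall a : R, 0 < `|a| < 1 -> not_contraction (A410 R) (A34a_A1 a)) /\
  (forall b : R, 0 < b -> not_contraction (two_A21 R) (A35b_A1 b)).
Proof.
have n1 : (-1 : R) < 0 by rewrite ltrN10.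
split; first exact: not_contr (@so3_TQ R) (@A48_N R).
split; first exact: not_contr (@so3_TQ R) (@A34m1_N R 0 (-1) n1).
split; first exact: not_contr (@A48_TQ R) (@A350_N R).
split; first exact: not_contr (@A490_TQ R) (@A34m1_N R 0 (-1) n1).
split; first exact: not_contr (@A410_TQ R) (@A43_N R).
split; first exact: not_contr (@A410_TQ R) (@A21_N R).
split.
  by move=> a ha; exact: not_contr (@A410_TQ R) (@A34a_N R a ha).
by move=> b hb; exact: not_contr (@tA21_TQ R) (@A35b_N R b hb).
Qed.
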